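(* Let $A$ be an effect on a complex separable Hilbert space $\mathcal{H}$, with spectrum $\sigma_A$, and write $A'=I-A$. Then the operator $AA'$ satisfies: (a) $\mathbb{O}\le AA'\le\tfrac14 I$; (b) $\tfrac14-\max\bigl\{(\|A\|-\tfrac12)^2,(\|A'\|-\tfrac12)^2\bigr\}\le\|AA'\|\le\tfrac14$; (c) $\|AA'\|=\tfrac14$ if and only if $\tfrac12\in\sigma_A$; (d) $\|I-AA'\|=\tfrac34+\max\bigl\{(\|A\|-\tfrac12)^2,(\|A'\|-\tfrac12)^2\bigr\}$.
   Context: An effect is a selfadjoint bounded operator $A$ with $\mathbb{O}\le A\le I$. Norms are operator norms. *)

(* Defs.v *)
From HB Require Import structures.
From mathcomp Require Import all_boot all_order all_algebra.
From mathcomp Require Import complex.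
From mathcomp Require Import boolp classical_sets reals.
Set Implicit Arguments. Unset Strict Implicit. Unset Printing Implicit Defensive.
Import Order.TTheory GRing.Theory Num.Theory.
Local Open Scope ring_scope.
Local Open Scope classical_set_scope.

Section Hilbert.
Variable R : realType.
Variable H : lmodType R[i].
Variable ip : H -> H -> R[i].   (* inner product, linear in the first argument *)

Definition hnorm (x : H) : R := Num.sqrt (complex.Re (ip x x)).

Record isHilbert : Prop := {
  ip_linl : forall (a : R[i]) (x y z : H), ip (a *: x + y) z = a * ip x z + ip y z;
  ip_conj : forall x y : H, ip y x = conjc (ip x y);
  ip_ge0  : forall x : H, 0 <= ip x x;
  ip_def  : forall x : H, ip x x = 0 -> x = 0;
  ip_complete : forall u : nat -> H,
     (forall e : R, 0 < e -> exists N, forall m n, (N <= m)%N -> (N <= n)%N ->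
        hnorm (u m - u n) < e) ->
     exists l : H, forall e : R, 0 < e -> exists N, forall n, (N <= n)%N ->
        hnorm (u n - l) < e;
  ip_separable : exists d : nat -> H, forall (x : H) (e : R), 0 < e ->
     exists n, hnorm (x - d n) < e
}.

Definition bounded_op (T : H -> H) : Prop :=
  (forall (a : R[i]) (x y : H), T (a *: x + y) = a *: T x + T y) /\
  exists M : R, forall x, hnorm (T x) <= M * hnorm x.

Definition opnorm (T : H -> H) : R := sup [set hnorm (T x) | x in [set x | hnorm x <= 1]].

Definition selfadjoint (T : H -> H) : Prop := forall x y, ip (T x) y = ip x (T y).

(* Loewner order: S <= T iff <Sx,x> <= <Tx,x> for all x (order of R[i]:
   the difference is real and nonnegative) *)
Definition le_op (S T : H -> H) : Prop := forall x, ip (S x) x <= ip (T x) x.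

Definition effect (A : H -> H) : Prop :=
  [/\ bounded_op A, selfadjoint A, le_op (fun _ => 0) A & le_op A id].

Definition spectrum (T : H -> H) : set R[i] :=
  [set l | ~ exists B : H -> H, [/\ bounded_op B,
        cancel (fun x => T x - l *: x) B & cancel B (fun x => T x - l *: x)]].

End Hilbert.

(* Main.v *)
Require Import Defs.
From HB Require Import structures.
From mathcomp Require Import all_boot all_order all_algebra.
From mathcomp Require Import complex.
From mathcomp Require Import boolp classical_sets reals.
From mathcomp Require Import ring lra.
Import Order.TTheory GRing.Theory Num.Theory.
Local Open Scope ring_scope.
Local Open Scope classical_set_scope.

Section Core.
Variable R : realType.
Variable H : lmodType R[i].
Variable ip : H -> H -> R[i].
Hypothesis hH : isHilbert ip.

Notation Rec := (@complex.Re R).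
Notation Imc := (@complex.Im R).
Notation RC r := ((r%:C)%C : R[i]).

Definition re (x y : H) : R := Rec (ip x y).
Definition nn (x : H) : R := re x x.

Lemma RecD (a b : R[i]) : Rec (a + b) = Rec a + Rec b.
Proof. by case: a => ? ?; case: b => ? ?. Qed.
Lemma RecN (a : R[i]) : Rec (- a) = - Rec a.
Proof. by case: a. Qed.
Lemma RecM (r : R) (w : R[i]) : Rec (RC r * w) = r * Rec w.
Proof. case: w => ? ? /=. ring. Qed.
Lemma ImcD (a b : R[i]) : Imc (a + b) = Imc a + Imc b.
Proof. by case: a => ? ?; case: b => ? ?. Qed.
Lemma ImcN (a : R[i]) : Imc (- a) = - Imc a.
Proof. by case: a. Qed.
Lemma ImcM (r : R) (w : R[i]) : Imc (RC r * w) = r * Imc w.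
Proof. case: w => ? ? /=. ring. Qed.
Lemma Recconj (w : R[i]) : Rec (conjc w) = Rec w.
Proof. by case: w. Qed.
Lemma Imcconj (w : R[i]) : Imc (conjc w) = - Imc w.
Proof. by case: w. Qed.
Lemma inv2C : (2^-1 : R[i]) = RC (2^-1).
Proof. by rewrite fmorphV rmorph_nat. Qed.
Lemma inv4C : (4^-1 : R[i]) = RC (4^-1).
Proof. by rewrite fmorphV rmorph_nat. Qed.
Lemma RCM (r s : R) : RC r * RC s = RC (r * s).
Proof. by rewrite rmorphM. Qed.
Lemma RCD (r s : R) : RC r + RC s = RC (r + s).
Proof. by rewrite rmorphD. Qed.
Lemma RC1 : RC 1 = 1. Proof. by []. Qed.

Lemma ipDl x y z : ip (x + y) z = ip x z + ip y z.
Proof. by have := ip_linl hH 1 x y z; rewrite scale1r mul1r. Qed.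
Lemma ip0l z : ip 0 z = 0.
Proof.
have h := ipDl 0 0 z; rewrite addr0 in h.
by apply: (addrI (ip 0 z)); rewrite addr0 -h.
Qed.
Lemma ipZl a x z : ip (a *: x) z = a * ip x z.
Proof. by have := ip_linl hH a x 0 z; rewrite addr0 ip0l addr0. Qed.
Lemma ipNl x z : ip (- x) z = - ip x z.
Proof. by rewrite -scaleN1r ipZl mulN1r. Qed.

Lemma reDl x y z : re (x + y) z = re x z + re y z.
Proof. by rewrite /re ipDl RecD. Qed.
Lemma reNl x z : re (- x) z = - re x z.
Proof. by rewrite /re ipNl RecN. Qed.
Lemma reBl x y z : re (x - y) z = re x z - re y z.
Proof. by rewrite reDl reNl. Qed.
Lemma re0l z : re 0 z = 0.
Proof. by rewrite /re ip0l. Qed.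
Lemma reZl r x z : re (RC r *: x) z = r * re x z.
Proof. by rewrite /re ipZl RecM. Qed.
Lemma reC x y : re x y = re y x.
Proof. by rewrite /re (ip_conj hH x y) Recconj. Qed.
Lemma reDr x y z : re z (x + y) = re z x + re z y.
Proof. by rewrite reC reDl !(reC z). Qed.
Lemma reNr x z : re z (- x) = - re z x.
Proof. by rewrite reC reNl reC. Qed.
Lemma reBr x y z : re z (x - y) = re z x - re z y.
Proof. by rewrite reDr reNr. Qed.
Lemma reZr r x z : re z (RC r *: x) = r * re z x.
Proof. by rewrite reC reZl reC. Qed.

Lemma Imip x : Imc (ip x x) = 0.
Proof. by have := ip_ge0 hH x; rewrite lecE => /andP[/eqP -> _]. Qed.
Lemma nn_ge0 x : 0 <= nn x.
Proof. by have := ip_ge0 hH x; rewrite lecE => /andP[_ ]. Qed.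
Lemma ipxx x : ip x x = RC (nn x).
Proof. by rewrite /nn /re; move: (Imip x); case: (ip x x) => a b /= ->. Qed.
Lemma nn_eq0 x : nn x = 0 -> x = 0.
Proof. by move=> h; apply: (ip_def hH); rewrite ipxx h. Qed.

Lemma nnD x y : nn (x + y) = nn x + 2 * re x y + nn y.
Proof. rewrite /nn reDl !reDr (reC y x); ring. Qed.
Lemma nnB x y : nn (x - y) = nn x - 2 * re x y + nn y.
Proof. rewrite /nn reBl !reBr (reC y x); ring. Qed.
Lemma nnN x : nn (- x) = nn x.
Proof. by rewrite /nn reNl reNr opprK. Qed.
Lemma nnZ r x : nn (RC r *: x) = r ^+ 2 * nn x.
Proof. rewrite /nn reZl reZr; ring. Qed.

Lemma hnormE x : hnorm ip x = Num.sqrt (nn x).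
Proof. by []. Qed.
Lemma hnorm_ge0 x : 0 <= hnorm ip x.
Proof. exact: sqrtr_ge0. Qed.
Lemma hnorm_sq x : hnorm ip x ^+ 2 = nn x.
Proof. by rewrite hnormE sqr_sqrtr // nn_ge0. Qed.


Lemma hle x y c : 0 <= c -> (hnorm ip x <= c * hnorm ip y) <-> (nn x <= c ^+ 2 * nn y).
Proof.
move=> c0; have a0 := hnorm_ge0 x; have b0 := hnorm_ge0 y.
rewrite -(hnorm_sq x) -(hnorm_sq y); split => h.
  have : 0 <= c * hnorm ip y by apply: mulr_ge0.
  nra.
have : 0 <= c * hnorm ip y by apply: mulr_ge0.
nra.
Qed.

Lemma hle1 x c : 0 <= c -> (hnorm ip x <= c) <-> (nn x <= c ^+ 2).
Proof.
move=> c0; have a0 := hnorm_ge0 x; rewrite -(hnorm_sq x); split => h; nra.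
Qed.

Lemma nn0 : nn 0 = 0.
Proof. by rewrite /nn re0l. Qed.

Lemma CS x y : re x y <= hnorm ip x * hnorm ip y.
Proof.
set a := hnorm ip x; set b := hnorm ip y.
have a0 : 0 <= a by apply: hnorm_ge0.
have b0 : 0 <= b by apply: hnorm_ge0.
have [az|anz] := eqVneq a 0.
  have : nn x = 0 by rewrite -hnorm_sq -/a az expr0n.
  by move/nn_eq0 ->; rewrite re0l az mul0r.
have [bz|bnz] := eqVneq b 0.
  have : nn y = 0 by rewrite -hnorm_sq -/b bz expr0n.
  by move/nn_eq0 ->; rewrite reC re0l bz mulr0.
have ap : 0 < a by rewrite lt_def anz.
have bp : 0 < b by rewrite lt_def bnz.
have h := nn_ge0 (RC b *: x - RC a *: y).
rewrite nnB !nnZ reZl reZr -!hnorm_sq -/a -/b in h.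
have abp : 0 < a * b by apply: mulr_gt0.
nra.
Qed.

Lemma CSabs x y : `|re x y| <= hnorm ip x * hnorm ip y.
Proof.
rewrite ler_norml CS andbT.
have := CS (- x) y; rewrite reNl hnormE nnN -hnormE; lra.
Qed.

Lemma hnormD x y : hnorm ip (x + y) <= hnorm ip x + hnorm ip y.
Proof.
have a0 := hnorm_ge0 x; have b0 := hnorm_ge0 y.
apply/(hle1 _ _ (addr_ge0 a0 b0)); rewrite nnD -!hnorm_sq.
have := CS x y; nra.
Qed.

Lemma hnormN x : hnorm ip (- x) = hnorm ip x.
Proof. by rewrite !hnormE nnN. Qed.

Definition lin (T : H -> H) := forall (a : R[i]) x y, T (a *: x + y) = a *: T x + T y.
Definition sa (T : H -> H) := forall x y, re (T x) y = re x (T y).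
Definition q (T : H -> H) x := re (T x) x.

Section Lin.
Variable T : H -> H.
Hypothesis lT : lin T.
Lemma linD x y : T (x + y) = T x + T y.
Proof. by have := lT 1 x y; rewrite !scale1r. Qed.
Lemma lin0 : T 0 = 0.
Proof.
have h := linD 0 0; rewrite addr0 in h.
by apply: (addrI (T 0)); rewrite addr0 -h.
Qed.
Lemma linZ a x : T (a *: x) = a *: T x.
Proof. by have := lT a x 0; rewrite !addr0 lin0 addr0. Qed.
Lemma linN x : T (- x) = - T x.
Proof. by rewrite -scaleN1r linZ scaleN1r. Qed.
Lemma linB x y : T (x - y) = T x - T y.
Proof. by rewrite linD linN. Qed.
End Lin.
Arguments linD {T}. Arguments lin0 {T}. Arguments linZ {T}. Arguments linN {T}. Arguments linB {T}.

Lemma KL T c : lin T -> sa T -> 0 <= c -> (forall x, `|q T x| <= c * nn x) ->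
  forall x, nn (T x) <= c ^+ 2 * nn x.
Proof.
move=> lT sT c0 hq x.
have key : forall y, 4 * re (T x) y <= c * (2 * nn x + 2 * nn y).
  move=> y.
  have := hq (x + y); have := hq (x - y); rewrite !ler_norml /q.
  rewrite (linB lT) (linD lT) !reBl !reDl !reBr !reDr nnB nnD.
  have e : re (T y) x = re (T x) y by rewrite sT reC.
  rewrite e.
  move=> /andP[h1 h2] /andP[h3 h4].
  have : 0 <= c * nn x by apply: mulr_ge0 => //; apply: nn_ge0.
  have : 0 <= c * nn y by apply: mulr_ge0 => //; apply: nn_ge0.
  nra.
have ks : forall s, 4 * (s * nn (T x)) <= c * (2 * nn x + 2 * (s ^+ 2 * nn (T x))).
  by move=> s; have := key (RC s *: T x); rewrite reZr nnZ.
have N0 := nn_ge0 (T x); have X0 := nn_ge0 x.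
have [cz|cnz] := eqVneq c 0.
  by have := ks 1; rewrite cz; nra.
have cp : 0 < c by rewrite lt_def cnz.
have := ks c^-1.
have ci : c * c^-1 = 1 by rewrite divff.
have cip : 0 < c^-1 by rewrite invr_gt0.
set d := c^-1 in ci cip *.
have -> : c * (2 * nn x + 2 * (d ^+ 2 * nn (T x))) = 2 * c * nn x + 2 * d * nn (T x).
  by rewrite mulrDr; congr (_ + _); [ring | rewrite expr2; transitivity (2 * (c * d) * d * nn (T x)); [ring | rewrite ci; ring]].
move=> h.
have h2 : d * nn (T x) <= c * nn x by lra.
have := ler_wpM2l (ltW cp) h2.
rewrite mulrA ci mul1r mulrA -expr2 //.
Qed.
Arguments KL {T c}.


Definition Sset (T : H -> H) := [set hnorm ip (T x) | x in [set x | hnorm ip x <= 1]].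
Definition bnd (T : H -> H) c := 0 <= c /\ forall x, nn (T x) <= c ^+ 2 * nn x.

Lemma hnorm0 : hnorm ip 0 = 0.
Proof. by rewrite hnormE nn0 sqrtr0. Qed.

Lemma Sset0 T : lin T -> Sset T 0.
Proof. move=> lT; exists 0; rewrite /= ?hnorm0 ?(lin0 lT) ?hnorm0 //. Qed.
Arguments Sset0 {T}.

Lemma Sset_ub T c : bnd T c -> ubound (Sset T) c.
Proof.
move=> [c0 hb] _ [x /= hx <-].
apply/hle1 => //; move/(hle1 _ _ ler01): hx; rewrite expr1n => hx.
have := hb x; have := nn_ge0 x; have : 0 <= c ^+ 2 by apply: sqr_ge0.
nra.
Qed.
Arguments Sset_ub {T c}.

Lemma has_sup_S T c : lin T -> bnd T c -> has_sup (Sset T).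
Proof. move=> lT hb; split; [exists 0; exact: Sset0 | exists c; exact: Sset_ub hb]. Qed.
Arguments has_sup_S {T c}.

Lemma opnorm_le T c : lin T -> bnd T c -> opnorm ip T <= c.
Proof. move=> lT hb; apply: ge_sup; [exists 0; exact: Sset0 | exact: Sset_ub]. Qed.
Arguments opnorm_le {T c}.

Lemma opnorm_ge0 T c : lin T -> bnd T c -> 0 <= opnorm ip T.
Proof. by move=> lT hb; exact: (sup_upper_bound (has_sup_S lT hb) (Sset0 lT)). Qed.
Arguments opnorm_ge0 {T c}.

Lemma normalize x : x != 0 -> nn (RC (hnorm ip x)^-1 *: x) = 1.
Proof.
move=> xn; rewrite nnZ -hnorm_sq exprVn mulVf // expf_neq0 //.
apply/eqP => h; move/eqP: xn; apply; apply: nn_eq0; by rewrite -hnorm_sq h expr0n.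
Qed.

Lemma hnorm_gt0 x : x != 0 -> 0 < hnorm ip x.
Proof.
move=> xn; rewrite lt_def hnorm_ge0 andbT; apply/eqP => h.
move/eqP: xn; apply; apply: nn_eq0; by rewrite -hnorm_sq h expr0n.
Qed.

Lemma opnorm_ge T c : lin T -> bnd T c ->
  forall x, nn (T x) <= opnorm ip T ^+ 2 * nn x.
Proof.
move=> lT hb x; set s := opnorm ip T.
have s0 : 0 <= s by apply: opnorm_ge0 hb.
have ub := sup_upper_bound (has_sup_S lT hb).
have [->|xn] := eqVneq x 0; first by rewrite (lin0 lT) nn0 mulr0.
set a := hnorm ip x; have ap : 0 < a by apply: hnorm_gt0.
set y := RC a^-1 *: x.
have ny : nn y = 1 by apply: normalize.
have hy : hnorm ip (T y) <= s.
  by apply: ub; exists y => //=; apply/hle1 => //; rewrite ny expr1n.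
have := (proj1 (hle1 _ _ s0) hy).
rewrite /y (linZ lT) nnZ -(hnorm_sq x) -/a => h.
have e : a ^+ 2 * (a^-1 ^+ 2 * nn (T x)) = nn (T x).
  by rewrite mulrA -exprMn divff ?gt_eqF // expr1n mul1r.
rewrite -e.
have : 0 <= a ^+ 2 by apply: sqr_ge0.
nra.
Qed.
Arguments opnorm_ge {T c}.

Lemma unit_ex : (exists x : H, x != 0) -> exists x, nn x = 1.
Proof. by move=> [x xn]; exists (RC (hnorm ip x)^-1 *: x); apply: normalize. Qed.

Lemma opnorm_approx T c e : lin T -> bnd T c -> (exists x : H, x != 0) -> 0 < e ->
  exists x, nn x = 1 /\ opnorm ip T - e < hnorm ip (T x).
Proof.
move=> lT hb hx0 ep.
have [_ [y /= hy <-] hlt] := sup_adherent ep (has_sup_S lT hb).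
rewrite -/(opnorm ip T) in hlt.
have [yz|yn] := eqVneq y 0.
  have [x0 nx0] := unit_ex hx0; exists x0; split => //.
  move: hlt; rewrite yz (lin0 lT) hnorm0 => hlt.
  by apply: (lt_le_trans hlt); apply: hnorm_ge0.
set a := hnorm ip y; have ap : 0 < a by apply: hnorm_gt0.
exists (RC a^-1 *: y); split; first by apply: normalize.
apply: (lt_le_trans hlt).
rewrite !hnormE ler_sqrt; last by apply: nn_ge0.
rewrite (linZ lT) nnZ.
have a1 : a <= 1 by [].
have ai : 1 <= a^-1 by rewrite invr_ge1 // unitfE gt_eqF.
have : 1 <= a^-1 ^+ 2 by rewrite -(expr1n _ 2) ler_pXn2r // ?nnegrE //; lra.
have := nn_ge0 (T y); nra.
Qed.
Arguments opnorm_approx {T c e}.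


Lemma hnorm1 x : nn x = 1 -> hnorm ip x = 1.
Proof. by move=> h; rewrite hnormE h sqrtr1. Qed.

Lemma q_le_opnorm T c x : lin T -> bnd T c -> nn x = 1 -> q T x <= opnorm ip T.
Proof.
move=> lT hb nx.
have s0 := opnorm_ge0 lT hb.
have h := opnorm_ge lT hb x; rewrite nx mulr1 in h.
have : hnorm ip (T x) <= opnorm ip T by apply/hle1.
have := CS (T x) x; rewrite (hnorm1 x nx) mulr1 /q; lra.
Qed.

Lemma lin_sub S T : lin S -> lin T -> lin (fun x => S x - T x).
Proof. by move=> lS lT a x y; rewrite lS lT scalerBr opprD addrACA. Qed.
Lemma lin_scal (r : R[i]) : lin (fun x => r *: x).
Proof. by move=> a x y; rewrite scalerDr !scalerA mulrC. Qed.
Lemma lin_comp S T : lin S -> lin T -> lin (fun x => S (T x)).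
Proof. by move=> lS lT a x y; rewrite lT lS. Qed.
Arguments lin_sub {S T}. Arguments lin_comp {S T}.
Lemma lin_id : lin id.
Proof. by []. Qed.

Section Effect.
Variable E : H -> H.
Hypothesis lE : lin E.
Hypothesis sE : sa E.
Hypothesis hE : forall x, 0 <= q E x <= nn x.

Definition T0 x := E x - RC (2^-1) *: x.
Definition B x := E x - E (E x).
Definition IB x := x - B x.

Lemma lin_T0 : lin T0.
Proof. exact: (lin_sub lE (lin_scal _)). Qed.
Lemma lin_B : lin B.
Proof. exact: (lin_sub lE (lin_comp lE lE)). Qed.
Lemma lin_IB : lin IB.
Proof. exact: (lin_sub lin_id lin_B). Qed.

Lemma sa_T0 : sa T0.
Proof. by move=> x y; rewrite /T0 reBl reBr reZl reZr sE reC. Qed.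
Lemma sa_B : sa B.
Proof. by move=> x y; rewrite /B reBl reBr !sE. Qed.
Lemma sa_IB : sa IB.
Proof. by move=> x y; rewrite /IB reBl reBr sa_B. Qed.

Lemma bnd_E : bnd E 1.
Proof.
split => //; apply: KL => // x; rewrite mul1r ger0_norm; by case/andP: (hE x).
Qed.

Lemma qT0 x : q T0 x = q E x - nn x / 2.
Proof. by rewrite /q /T0 reBl reZl /nn mulrC. Qed.

Lemma nnT0 x : nn (T0 x) = nn (E x) - q E x + nn x / 4.
Proof. by rewrite /T0 nnB nnZ reZr /q; field. Qed.

Lemma bnd_T0 : bnd T0 (2^-1).
Proof.
split; first by lra.
apply: KL; [exact: lin_T0 | exact: sa_T0 | lra |] => x.
rewrite qT0 ler_norml; case/andP: (hE x) => h1 h2; apply/andP; split; lra.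
Qed.

Lemma nnE_le_q x : nn (E x) <= q E x.
Proof.
have := (proj2 bnd_T0) x; rewrite nnT0; have := nn_ge0 x; lra.
Qed.

Lemma qB x : q B x = q E x - nn (E x).
Proof. by rewrite /q /B reBl (sE (E x) x). Qed.

Lemma qB_bounds x : 0 <= q B x <= nn x / 4.
Proof.
rewrite qB; have := nnE_le_q x; have := nn_ge0 (T0 x); rewrite nnT0.
move=> h1 h2; apply/andP; split; lra.
Qed.

Lemma nnT0B x : nn (T0 x) = nn x / 4 - q B x.
Proof. rewrite nnT0 qB; ring. Qed.

Lemma bnd_B : bnd B (4^-1).
Proof.
split; first by lra.
apply: KL; [exact: lin_B | exact: sa_B | lra |] => x.
case/andP: (qB_bounds x) => h1 h2; rewrite ger0_norm //; lra.
Qed.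

Lemma qIB x : q IB x = nn x - q B x.
Proof. by rewrite /q /IB reBl. Qed.

Lemma bnd_IB : bnd IB 1.
Proof.
split; first by lra.
apply: KL; [exact: lin_IB | exact: sa_IB | lra |] => x.
rewrite qIB; case/andP: (qB_bounds x) => h1 h2; have := nn_ge0 x => h3.
rewrite ger0_norm; lra.
Qed.

Lemma opnormE_le1 : opnorm ip E <= 1.
Proof. exact: opnorm_le bnd_E. Qed.

Lemma IB_lower : (exists x : H, x != 0) ->
  3 / 4 + (opnorm ip E - 2^-1) ^+ 2 <= opnorm ip IB.
Proof.
move=> hx0; apply/ler_addgt0Pr => e ep.
have [x [nx hx]] := opnorm_approx lE bnd_E hx0 ep.
set al := opnorm ip E in hx *; set h := hnorm ip (E x) in hx.
have al1 : al <= 1 := opnormE_le1.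
have h0 : 0 <= h by apply: hnorm_ge0.
have hal : h <= al.
  apply/hle1; first by apply: opnorm_ge0 bnd_E.
  by have := opnorm_ge lE bnd_E x; rewrite nx mulr1.
have qh : q E x <= h by have := CS (E x) x; rewrite (hnorm1 x nx) mulr1.
have hb := q_le_opnorm _ _ _ lin_IB bnd_IB nx.
rewrite qIB qB nx -(hnorm_sq (E x)) -/h in hb.
nra.
Qed.

End Effect.
Arguments lin_T0 {E}.
Arguments lin_B {E}.
Arguments lin_IB {E}.
Arguments sa_T0 {E}.
Arguments sa_B {E}.
Arguments sa_IB {E}.
Arguments bnd_E {E}.
Arguments bnd_T0 {E}.
Arguments nnE_le_q {E}.
Arguments qB_bounds {E}.
Arguments bnd_B {E}.
Arguments bnd_IB {E}.
Arguments opnormE_le1 {E}.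
Arguments IB_lower {E}.


Lemma geo_bound (c : R) N : 0 <= c <= 1 -> c ^+ N * (1 + N%:R * (1 - c)) <= 1.
Proof.
move=> /andP[c0 c1]; elim: N => [|N IH]; first by rewrite expr0 mul0r addr0 mulr1.
rewrite exprS -natr1.
have cN1 : c ^+ N <= 1 by apply: exprn_ile1.
have cN0 : 0 <= c ^+ N by apply: exprn_ge0.
have n0 : 0 <= N%:R :> R by apply: ler0n.
have h1 := ler_wpM2l c0 IH.
have cP : c * c ^+ N <= 1 by rewrite -exprS; apply: exprn_ile1.
have h2 : c * c ^+ N * (1 - c) <= 1 - c by rewrite ler_piMl //; lra.
set P := c ^+ N in IH h1 cP h2 *.
set n := N%:R in IH h1 n0 *.
have -> : c * P * (1 + (n + 1) * (1 - c)) = c * (P * (1 + n * (1 - c))) + c * P * (1 - c) by ring.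
lra.
Qed.

Lemma geo_small (c V e : R) : 0 <= c < 1 -> 0 <= V -> 0 < e ->
  exists N, c ^+ N * V < e.
Proof.
move=> /andP[c0 c1] V0 ep.
have s0 : 0 < 1 - c by rewrite subr_gt0.
have es : 0 < e * (1 - c) by apply: mulr_gt0.
set x := V / (e * (1 - c)).
have x0 : 0 <= x by apply: divr_ge0 => //; apply: ltW.
have hN := archi_boundP x0.
set N := Num.Def.archi_bound x in hN.
exists N.
have hx : x * (e * (1 - c)) = V by rewrite /x divfK // gt_eqF.
have hg := geo_bound c N (introT andP (conj c0 (ltW c1))).
have h1 : V < N%:R * (e * (1 - c)).
  by rewrite -hx ltr_pM2r.
have cN0 : 0 <= c ^+ N by apply: exprn_ge0.
have n0 : 0 <= N%:R :> R by apply: ler0n.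
set P := c ^+ N in hg cN0 *; set n := N%:R in hg h1 n0 *.
have q0 : 0 < 1 + n * (1 - c) by have := mulr_ge0 n0 (ltW s0); lra.
have h2 := ler_wpM2l V0 hg.
have h3 : V * (P * (1 + n * (1 - c))) < e * (1 + n * (1 - c)).
  apply: (le_lt_trans h2); rewrite mulr1.
  apply: (lt_le_trans h1).
  have -> : n * (e * (1 - c)) = e * (n * (1 - c)) by ring.
  rewrite mulrDr mulr1; lra.
rewrite -(ltr_pM2r q0).
have -> : P * V * (1 + n * (1 - c)) = V * (P * (1 + n * (1 - c))) by ring.
exact: h3.
Qed.

Section Neumann.
Variable C : H -> H.
Hypothesis lC : lin C.
Variable c : R.
Hypothesis c12 : 2^-1 <= c.
Hypothesis c1 : c < 1.
Hypothesis hC : forall x, hnorm ip (C x) <= c * hnorm ip x.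
Variable v : H.

Lemma c0 : 0 <= c.
Proof. by apply: le_trans c12; rewrite invr_ge0. Qed.

Definition zs n := iter n (fun w => v + C w) 0.

Lemma zsS n : zs n.+1 = v + C (zs n).
Proof. by []. Qed.

Lemma dsS n : zs n.+2 - zs n.+1 = C (zs n.+1 - zs n).
Proof. by rewrite (linB lC) (zsS n.+1) {2}(zsS n) opprD addrA (addrAC v) subrr add0r. Qed.

Lemma ds_bound n : hnorm ip (zs n.+1 - zs n) <= c ^+ n * hnorm ip v.
Proof.
elim: n => [|n IH].
  by rewrite expr0 mul1r /zs /= (lin0 lC) !addr0 subr0.
rewrite dsS; apply: (le_trans (hC _)); rewrite exprS -mulrA.
by apply: ler_wpM2l => //; apply: c0.
Qed.

Lemma zs_cauchy0 n k : (1 - c) * hnorm ip (zs (n + k) - zs n) <= (c ^+ n - c ^+ (n + k)) * hnorm ip v.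
Proof.
elim: k => [|k IH].
  by rewrite !addn0 subrr hnorm0 mulr0 subrr mul0r.
have e : zs (n + k.+1) - zs n = (zs (n + k).+1 - zs (n + k)) + (zs (n + k) - zs n).
  by rewrite addnS addrA subrK.
rewrite e.
have h1 := hnormD (zs (n + k).+1 - zs (n + k)) (zs (n + k) - zs n).
have h2 := ds_bound (n + k).
have h3 : 0 <= 1 - c by rewrite subr_ge0; apply: ltW.
have h4 := ler_wpM2l h3 h1.
rewrite addnS exprS.
have : 0 <= c ^+ (n + k) by apply: exprn_ge0; exact: c0.
have := hnorm_ge0 v.
nra.
Qed.

Lemma zs_cauchy1 N m n : (N <= n)%N -> (n <= m)%N ->
  (1 - c) * hnorm ip (zs m - zs n) <= c ^+ N * hnorm ip v.
Proof.
move=> hNn hnm.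
have := zs_cauchy0 n (m - n); rewrite subnKC // => h.
apply: (le_trans h).
have hv := hnorm_ge0 v.
have : c ^+ n <= c ^+ N.
  by rewrite -(subnKC hNn) exprD; apply: ler_piMr; [apply: exprn_ge0; exact: c0 | apply: exprn_ile1; [exact: c0 | exact: ltW]].
have : 0 <= c ^+ m by apply: exprn_ge0; exact: c0.
nra.
Qed.

Lemma zs_cauchy N m n : (N <= n)%N -> (N <= m)%N ->
  (1 - c) * hnorm ip (zs m - zs n) <= c ^+ N * hnorm ip v.
Proof.
move=> hn hm; have [hnm|hmn] := leqP n m; first exact: zs_cauchy1.
by rewrite -hnormN opprB; apply: (zs_cauchy1 N n m) => //; apply: ltnW.
Qed.

Lemma small0 x : (forall e, 0 < e -> hnorm ip x <= e) -> x = 0.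
Proof.
move=> h; apply: nn_eq0.
have h0 : hnorm ip x <= 0.
  by apply/ler_addgt0Pr => e ep; rewrite add0r; apply: h.
have := hnorm_ge0 x => h1.
have hz : hnorm ip x = 0 by apply/le_anti; rewrite h0 h1.
by rewrite -hnorm_sq hz expr0n.
Qed.

Lemma neumann_sol : exists w, w - C w = v.
Proof.
have s0 : 0 < 1 - c by rewrite subr_gt0.
have [l hl] : exists l : H, forall e : R, 0 < e -> exists N, forall n, (N <= n)%N ->
        hnorm ip (zs n - l) < e.
  apply: (ip_complete hH) => e ep.
  have [N hN] := geo_small c (hnorm ip v) (e * (1 - c)) (introT andP (conj c0 c1)) (hnorm_ge0 v) (mulr_gt0 ep s0).
  exists N => m n hm hn.
  have := zs_cauchy N m n hn hm.
  have := hnorm_ge0 (zs m - zs n).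
  nra.
exists l; apply: subr0_eq; apply: small0 => e ep.
have [N hN] := hl (e / 2) (divr_gt0 ep (ltr0Sn R 1)).
have e1 : l - C l - v = (l - zs N.+1) + (C (zs N) - C l).
  by rewrite zsS opprD !addrA subrK addrAC.
rewrite e1; apply: (le_trans (hnormD _ _)).
have h1 := hN N.+1 (leqnSn N).
have h2 := hN N (leqnn N).
rewrite -hnormN opprB in h1.
have h3 := hC (zs N - l); rewrite (linB lC) in h3.
have hn0 := hnorm_ge0 (zs N - l).
have cc := c0.
have h5 : c * hnorm ip (zs N - l) <= e / 2.
  have := ler_wpM2l cc (ltW h2).
  move=> h; apply: (le_trans h); rewrite ler_piMl //; [lra | exact: ltW].
lra.
Qed.

End Neumann.


Lemma q_le_gen T c x : lin T -> bnd T c -> q T x <= opnorm ip T * nn x.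
Proof.
move=> lT hb.
have s0 := opnorm_ge0 lT hb.
have h := proj2 (hle (T x) x _ s0) (opnorm_ge lT hb x).
have := CS (T x) x; rewrite /q -hnorm_sq.
have := hnorm_ge0 x.
nra.
Qed.
Arguments q_le_gen {T c} x.

Lemma leC (w : R[i]) r : Imc w = 0 -> Rec w <= r -> w <= RC r.
Proof. by move=> h1 h2; rewrite lecE /= h1 eqxx. Qed.
Lemma geC (w : R[i]) r : Imc w = 0 -> r <= Rec w -> RC r <= w.
Proof. by move=> h1 h2; rewrite lecE /= h1 eqxx. Qed.

Lemma Im_sa T x : selfadjoint ip T -> Imc (ip (T x) x) = 0.
Proof.
move=> sT; have h := ip_conj hH (T x) x; rewrite -sT in h.
have : Imc (ip (T x) x) = - Imc (ip (T x) x) by rewrite {1}h Imcconj.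
lra.
Qed.

Section Main.
Variable A : H -> H.
Hypothesis lA : lin A.
Hypothesis sA : selfadjoint ip A.
Hypothesis hA : forall x, 0 <= q A x <= nn x.
Hypothesis hx0 : exists x : H, x != 0.

Lemma saA : sa A.
Proof. by move=> x y; rewrite /re sA. Qed.

Definition Ap x := x - A x.
Lemma lAp : lin Ap. Proof. exact: (lin_sub lin_id lA). Qed.
Lemma saAp : sa Ap. Proof. by move=> x y; rewrite /Ap reBl reBr saA. Qed.
Lemma hAp x : 0 <= q Ap x <= nn x.
Proof. rewrite /q /Ap reBl; case/andP: (hA x) => h1 h2; rewrite -/(nn x) -/(q A x); apply/andP; split; lra. Qed.

Lemma B_Ap x : B Ap x = B A x.
Proof. by rewrite /B /Ap (linB lA) opprB subrKC. Qed.
Lemma IB_Ap x : IB Ap x = IB A x.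
Proof. by rewrite /IB B_Ap. Qed.

Lemma ImB x : Imc (ip (B A x) x) = 0.
Proof.
rewrite /B ipDl ipNl ImcD ImcN Im_sa //.
have -> : ip (A (A x)) x = ip (A x) (A x) by rewrite sA.
by rewrite Imip subrr.
Qed.

Definition al := opnorm ip A.
Definition be := opnorm ip Ap.
Definition mm := Num.max ((al - 2^-1) ^+ 2) ((be - 2^-1) ^+ 2).

Lemma mm_ge0 : 0 <= mm.
Proof. by rewrite /mm le_max sqr_ge0. Qed.

Lemma nnT0_le x : nn (T0 A x) <= mm * nn x.
Proof.
have m0 := mm_ge0.
have -> : mm = Num.sqrt mm ^+ 2 by rewrite sqr_sqrtr.
apply: KL; [exact: (lin_T0 lA) | exact: (sa_T0 saA) | exact: sqrtr_ge0 |] => y.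
rewrite (qT0 A).
have h1 := q_le_gen y lA (bnd_E lA saA hA).
have h2 := q_le_gen y lAp (bnd_E lAp saAp hAp).
have ea : `|al - 2^-1| <= Num.sqrt mm.
  by rewrite -sqrtr_sqr ler_sqrt // /mm le_max lexx.
have eb : `|be - 2^-1| <= Num.sqrt mm.
  by rewrite -sqrtr_sqr ler_sqrt // /mm le_max lexx orbT.
move: ea eb; rewrite !ler_norml => /andP[ea1 ea2] /andP[eb1 eb2].
have n0 := nn_ge0 y.
have : q Ap y = nn y - q A y by rewrite /q /Ap reBl.
rewrite -/al -/be in h1 h2.
move=> e.
rewrite e in h2.
have p1 := ler_wpM2r n0 ea2.
have p2 := ler_wpM2r n0 eb2.
apply/andP; split; nra.
Qed.


Lemma partA : le_op ip (fun _ => 0) (B A) /\ le_op ip (B A) (fun x => 4^-1 *: x).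
Proof.
have hb := qB_bounds lA saA hA.
split => x /=.
  rewrite ip0l lecE ImB eqxx /=.
  exact: (proj1 (andP (hb x))).
rewrite ipZl inv4C ipxx RCM; apply: leC; first exact: ImB.
have := proj2 (andP (hb x)); rewrite /q /re => h; lra.
Qed.

Lemma partB : 4^-1 - mm <= opnorm ip (B A) /\ opnorm ip (B A) <= 4^-1.
Proof.
split; last exact: opnorm_le (lin_B lA) (bnd_B lA saA hA).
have [x0 nx0] := unit_ex hx0.
have h1 := q_le_opnorm _ _ _ (lin_B lA) (bnd_B lA saA hA) nx0.
have h2 := nnT0_le x0; rewrite (nnT0B A saA) nx0 mulr1 in h2.
lra.
Qed.

Lemma partD : opnorm ip (IB A) = 3 / 4 + mm.
Proof.
have m0 := mm_ge0.
apply/le_anti/andP; split.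
  apply: (opnorm_le (lin_IB lA)); split; first lra.
  apply: KL; [exact: (lin_IB lA) | exact: (sa_IB saA) | lra |] => x.
  rewrite qIB.
  have h1 := nnT0_le x; rewrite (nnT0B A saA) in h1.
  have := qB_bounds lA saA hA x => /andP[h2 h3].
  have := nn_ge0 x => h4.
  rewrite ger0_norm; lra.
have e1 : opnorm ip (IB Ap) = opnorm ip (IB A).
  by congr (opnorm ip _); apply: funext => x; apply: IB_Ap.
have la := IB_lower lA saA hA hx0.
have lb := IB_lower lAp saAp hAp hx0.
rewrite e1 in lb.
rewrite -/al -/be in la lb.
have : Num.max ((al - 2^-1) ^+ 2) ((be - 2^-1) ^+ 2) <= opnorm ip (IB A) - 3 / 4.
  by rewrite ge_max; apply/andP; split; lra.
rewrite -/mm; lra.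
Qed.


Lemma half_add (u : H) : RC (2^-1) *: u + RC (2^-1) *: u = u.
Proof.
rewrite -scalerDl RCD.
have -> : (2^-1 + 2^-1 : R) = 1 by field.
by rewrite scale1r.
Qed.

Lemma T0T0 w : T0 A (T0 A w) = RC (4^-1) *: (w - RC 4 *: B A w).
Proof.
rewrite /T0 (linB lA) (linZ lA) scalerBr scalerA RCM.
have e4 : 2^-1 * 2^-1 = 4^-1 :> R by field.
have e5 : 4^-1 * 4 = 1 :> R by field.
rewrite e4 scalerBr scalerA RCM e5 RC1 scale1r.
set a := A w; set b := A a; set p := RC (2^-1) *: a; set u := RC 4^-1 *: w.
rewrite /B -/a -/b.
rewrite -(half_add a) -/p.
(* (b - p) - (p - u) = u - ((p + p) - b) *)
rewrite !opprB opprD !addrA (addrC _ u) !addrA -(addrA u b) (addrC b) addrA.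
done.
Qed.


Lemma partC1 : opnorm ip (B A) = 4^-1 -> spectrum ip A 2^-1.
Proof.
move=> hk; rewrite /spectrum /= inv2C => -[Bi [[lBi [M hM]] c1 c2]].
set M' := Num.max M 1.
have M'1 : 1 <= M' by rewrite le_max lexx orbT.
have M'p : 0 < M' by lra.
have hM' : forall y, hnorm ip (Bi y) <= M' * hnorm ip y.
  move=> y; apply: (le_trans (hM y)); apply: ler_wpM2r; [exact: hnorm_ge0 | by rewrite le_max lexx].
set d := (M' ^+ 2)^-1.
have dp : 0 < d by rewrite invr_gt0 exprn_gt0.
have dM : d * M' ^+ 2 = 1 by rewrite mulVf // gt_eqF // exprn_gt0.
have key : forall x, q (B A) x <= (4^-1 - d) * nn x.
  move=> x.
  have h := hM' (T0 A x).
  have e := c1 x; rewrite /= in e.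
  rewrite /T0 e in h.
  have h2 := (proj1 (hle x (T0 A x) M' (ltW M'p))) h.
  rewrite (nnT0B A saA) in h2.
  have h3 := ler_wpM2l (ltW dp) h2; rewrite mulrA dM mul1r in h3.
  rewrite mulrBl; lra.
set c := Num.max (4^-1 - d) 0.
have bc : bnd (B A) c.
  split; first by rewrite le_max lexx orbT.
  apply: KL; [exact: lin_B lA | exact: sa_B saA | by rewrite le_max lexx orbT |] => x.
  have := qB_bounds lA saA hA x => /andP[h1 h2].
  rewrite ger0_norm //; apply: (le_trans (key x)); apply: ler_wpM2r; [exact: nn_ge0 | by rewrite le_max lexx].
have := opnorm_le (lin_B lA) bc.
rewrite hk => h.
have : c < 4^-1 by rewrite gt_max; apply/andP; split; lra.
lra.
Qed.


Lemma partC2 : spectrum ip A 2^-1 -> opnorm ip (B A) = 4^-1.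
Proof.
move=> hs.
have [//|hne] := eqVneq (opnorm ip (B A)) 4^-1.
exfalso; apply: hs; rewrite inv2C.
set k := opnorm ip (B A) in hne *.
have hk : k < 4^-1 by rewrite lt_neqAle hne; exact: (proj2 partB).
set dl := 4^-1 - k.
have dlp : 0 < dl by rewrite subr_gt0.
have k0 : 0 <= k := opnorm_ge0 (lin_B lA) (bnd_B lA saA hA).
have low : forall z, dl * nn z <= nn (T0 A z).
  move=> z; rewrite (nnT0B A saA).
  have := q_le_gen z (lin_B lA) (bnd_B lA saA hA); rewrite -/k => h.
  rewrite /dl mulrBl; lra.
have inj : forall z1 z2, T0 A z1 = T0 A z2 -> z1 = z2.
  move=> z1 z2 e; apply/subr0_eq/nn_eq0.
  have := low (z1 - z2); rewrite (linB (lin_T0 lA)) e subrr nn0 => h.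
  have := nn_ge0 (z1 - z2) => h0.
  apply/le_anti; rewrite h0 andbT; nra.
have surj : forall y, exists z, T0 A z = y.
  move=> y.
  set c := Num.max (4 * k) 2^-1.
  have c12 : 2^-1 <= c by rewrite le_max lexx orbT.
  have e4 : 4 * 4^-1 = 1 :> R by field.
  have e2 : 2 * 2^-1 = 1 :> R by field.
  have c1 : c < 1 by rewrite gt_max; apply/andP; split; lra.
  have c0 : 0 <= c by apply: le_trans c12; rewrite invr_ge0.
  have hC : forall x, hnorm ip (RC 4 *: B A x) <= c * hnorm ip x.
    move=> x; apply: (proj2 (hle (RC 4 *: B A x) x c c0)); rewrite nnZ.
    have h := opnorm_ge (lin_B lA) (bnd_B lA saA hA) x; rewrite -/k in h.
    have h4 : 4 * k <= c by rewrite le_max lexx.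
    have h5 : (4 * k) ^+ 2 <= c ^+ 2 by rewrite ler_pXn2r // ?nnegrE //; lra.
    have h6 := ler_wpM2r (nn_ge0 x) h5.
    have h7 := ler_wpM2l (sqr_ge0 (4 : R)) h.
    apply: (le_trans h7); apply: le_trans h6; rewrite exprMn mulrA //.
  have lC : lin (fun w => RC 4 *: B A w) := lin_comp (lin_scal _) (lin_B lA).
  have [w hw] := neumann_sol _ lC _ c12 c1 hC (RC 4 *: y).
  rewrite /= in hw.
  exists (T0 A w); rewrite T0T0 hw scalerA RCM.
  have e5 : 4^-1 * 4 = 1 :> R by field.
  by rewrite e5 RC1 scale1r.
have [Bi hBi] := choice surj.
exists Bi; split.
- split.
    by move=> a x y; apply: inj; rewrite hBi (lin_T0 lA) !hBi.
  exists (Num.sqrt dl^-1) => y.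
  apply: (proj2 (hle _ _ _ (sqrtr_ge0 _))); rewrite sqr_sqrtr; last by rewrite invr_ge0 ltW.
  have := low (Bi y); rewrite hBi => h.
  have e : dl^-1 * (dl * nn (Bi y)) = nn (Bi y) by rewrite mulrA mulVf ?gt_eqF // mul1r.
  rewrite -e; apply: ler_wpM2l => //; rewrite invr_ge0 ltW //.
- by move=> x; apply: inj; rewrite hBi.
- by move=> y; exact: hBi y.
Qed.

End Main.

End Core.

Theorem mainTheorem7 (R : realType) (H : lmodType R[i]) (ip : H -> H -> R[i])
  (hH : isHilbert ip) (hH0 : exists x : H, x != 0)
  (A : H -> H) (hA : effect ip A) :
  let A' := fun x => x - A x in
  let AA' := fun x => A (A' x) in
  let m := Num.max ((opnorm ip A - 2^-1) ^+ 2) ((opnorm ip A' - 2^-1) ^+ 2) in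
  [/\ le_op ip (fun _ => 0) AA' /\ le_op ip AA' (fun x => 4^-1 *: x),
      4^-1 - m <= opnorm ip AA' /\ opnorm ip AA' <= 4^-1,
      opnorm ip AA' = 4^-1 <-> 2^-1 \in spectrum ip A
    & opnorm ip (fun x => x - AA' x) = 3 / 4 + m].
Proof.
move=> A' AA' m.
case: hA => [[lA _] sA h0 h1].
have hq : forall x, 0 <= q R H ip A x <= nn R H ip x.
  move=> x; have := h0 x; have := h1 x.
  rewrite /= (@ip0l R H ip hH x) !lecE => /andP[_ a] /andP[_ b].
  by apply/andP; split.
have eAA : AA' = B R H A.
  by apply: funext => x; rewrite /AA' /A' /B (@linB R H A lA).
have em : m = mm R H ip A by [].
rewrite em eAA.
have eIB : (fun x => x - B R H A x) = IB R H A by [].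
rewrite eIB in_setE.
split.
- exact: partA R H ip hH A lA sA hq.
- exact: partB R H ip hH A lA sA hq hH0.
- split; [exact: partC1 R H ip hH A lA sA hq | exact: partC2 R H ip hH A lA sA hq hH0].
- exact: partD R H ip hH A lA sA hq hH0.
Qed.
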